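(* For the invertible $N$-component coupled KdV hierarchy (defined in the context), the vector fields $K_s$ are local for all $s\in\mathbf Z$.
   Context: Let $N\ge1$, $\partial=\partial/\partial x$, $\partial^{-1}$ a formal inverse of $\partial$. Let $u_0,\dots,u_{N-1}$ be smooth functions of $(x,t)$ (the fields, $u=(u_0,\dots,u_{N-1})^T$), set $u_N=-1$, and let $\varepsilon_1,\dots,\varepsilon_{N-1}$ be real constants, $\varepsilon_0=\varepsilon_N=0$. Put $J_i=\frac14\varepsilon_i\partial^3+\frac12(u_i\partial+\partial u_i)$, so $J_0=\frac12(u_0\partial+\partial u_0)$ and $J_N=-\partial$; $J_0=u_0^{1/2}\partial u_0^{1/2}$ and $J_N$ are invertible. Formal adjoint: $\partial^\dagger=-\partial$, multiplication operators self-adjoint, $(AB)^\dagger=B^\dagger A^\dagger$, transpose for matrices. Let $B_0$ be the $N\times N$ matrix with $(B_0)_{ij}=-J_{i+j-1}$ if $i+j-1\le N$ and $0$ otherwise, and $R$ the $N\times N$ matrix with $R_{ij}=\delta_{i,j+1}$ ($1\le j\le N-1$), $R_{iN}=-J_{i-1}J_N^{-1}$; $R$ is invertible, and $B_r:=R^rB_0$ ($r\in\mathbf Z$). One-forms: $\gamma_0=(0,\dots,0,2)^T$, $\gamma_{-1}=(u_0^{-1/2},0,\dots,0)^T$, $\gamma_s=(R^\dagger)^s\gamma_0$ and $\gamma_{-s}=((R^{-1})^\dagger)^{s-1}\gamma_{-1}$ for $s\ge1$. The hierarchy consists of the flows $u_{t_{-s}}=K_{-s}:=B_r\gamma_{-r-s}$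 ($s\ge1$, any $r>-s$) and $u_{t_s}=K_s:=B_r\gamma_{-r+s+N}$ ($s\ge0$, any $r\le s+N$), these being independent of $r$; in particular $K_{-s}=B_0\gamma_{-s}$, $K_s=B_N\gamma_s=B_0\gamma_{s+N}$, $K_s=R^sK_0$, $K_{-s}=(R^{-1})^{s-1}K_{-1}$, and explicitly the $i$-th component of $K_0$ is $u_{i-1,x}$ (components $i=1,\dots,N$, $u_{-1}=0$). A vector field (or one-form) is local if each component is a function of the fields and finitely many of their $x$-derivatives (no $\partial^{-1}$ appears). *)

(* Defs.v *)
From HB Require Import structures.
From mathcomp Require Import all_boot all_order all_algebra.
From mathcomp Require Import reals.
Set Implicit Arguments. Unset Strict Implicit. Unset Printing Implicit Defensive.
Import Order.TTheory GRing.Theory Num.Theory.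
Local Open Scope ring_scope.

Definition is_derivation (R : realType) (B : comAlgType R) (d : B -> B) : Prop :=
  (forall x y, d (x + y) = d x + d y) /\
  (forall (c : R) x, d (c *: x) = c *: d x) /\
  (forall x y, d (x * y) = d x * y + x * d y).

(* Fields: u i (i < N); convention u_N = -1 (other indices unused). *)
Definition ufld (R : realType) (B : comAlgType R) (N : nat) (u : nat -> B)
  (i : nat) : B := if (i < N)%N then u i else if i == N then -1 else 0.

Definition epsf (R : realType) (N : nat) (eps : nat -> R) (i : nat) : R :=
  if (0 < i < N)%N then eps i else 0.

Definition Jop (R : realType) (B : comAlgType R) (N : nat) (d : B -> B)
  (eps : nat -> R) (u : nat -> B) (i : nat) (f : B) : B :=
  (epsf N eps i / 4) *: d (d (d f)) +
  (2^-1 : R) *: (ufld N u i * d f + d (ufld N u i * f)).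

(* Vectors are nat -> B; component c (0 <= c < N) is the paper's (c+1)-th
   component.  Rrel x y  <=>  y = R x, where the nonlocal J_N^{-1} x_N is some
   g in B with J_N g = x_N (R_{ij} = delta_{i,j+1} (j <= N-1),
   R_{iN} = -J_{i-1} J_N^{-1}). *)
Definition Rrel (R : realType) (B : comAlgType R) (N : nat) (d : B -> B)
  (eps : nat -> R) (u : nat -> B) (x y : nat -> B) : Prop :=
  exists g : B, Jop N d eps u N g = x N.-1 /\
    forall c, (c < N)%N ->
      y c = (if c is c'.+1 then x c' else 0) - Jop N d eps u c g.

Definition K0 (R : realType) (B : comAlgType R) (N : nat) (d : B -> B)
  (u : nat -> B) (c : nat) : B := d (ufld N u c).

(* K_{-1} = B_0 gamma_{-1}, gamma_{-1} = (u_0^{-1/2}, 0, ..., 0):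
   i-th component  -J_i u_0^{-1/2}. *)
Definition Km1 (R : realType) (B : comAlgType R) (N : nat) (d : B -> B)
  (eps : nat -> R) (u : nat -> B) (winv : B) (c : nat) : B :=
  - Jop N d eps u c.+1 winv.

(* Lc is the subalgebra of local elements: a differential R-subalgebra of B
   containing the fields u_i, u_0^{1/2} = w and u_0^{-1/2} = winv. *)
Definition local_subalg (R : realType) (B : comAlgType R) (N : nat)
  (d : B -> B) (u : nat -> B) (w winv : B) (Lc : B -> Prop) : Prop :=
  (forall i, (i < N)%N -> Lc (u i)) /\ Lc w /\ Lc winv /\ Lc 1 /\
  (forall x y, Lc x -> Lc y -> Lc (x + y)) /\
  (forall x y, Lc x -> Lc y -> Lc (x * y)) /\
  (forall (c : R) x, Lc x -> Lc (c *: x)) /\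
  (forall x, Lc x -> Lc (d x)).

(* Main.v *)
Require Import Defs.
From HB Require Import structures.
From mathcomp Require Import all_boot all_order all_algebra.
From mathcomp Require Import reals.
From mathcomp Require Import zify ring.
Import Order.TTheory GRing.Theory Num.Theory.
Local Open Scope ring_scope.
Lemma dD {R : realType} {B : comAlgType R} {d : B -> B} :
  is_derivation d -> forall x y, d (x + y) = d x + d y.
Proof. by case. Qed.
Lemma dZ {R : realType} {B : comAlgType R} {d : B -> B} :
  is_derivation d -> forall (c : R) x, d (c *: x) = c *: d x.
Proof. by case=> _ []. Qed.
Lemma dM {R : realType} {B : comAlgType R} {d : B -> B} :
  is_derivation d -> forall x y, d (x * y) = d x * y + x * d y.
Proof. by case=> _ []. Qed.
Lemma d0 {R : realType} {B : comAlgType R} {d : B -> B} :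
  is_derivation d -> d 0 = 0.
Proof. move=> hd; have := dD hd 0 0; rewrite addr0 => /eqP.
by rewrite -subr_eq0 opprD addrA subrr add0r oppr_eq0 => /eqP. Qed.
Lemma dN {R : realType} {B : comAlgType R} {d : B -> B} :
  is_derivation d -> forall x, d (- x) = - d x.
Proof. by move=> hd x; rewrite -scaleN1r dZ // scaleN1r. Qed.
Lemma dB {R : realType} {B : comAlgType R} {d : B -> B} :
  is_derivation d -> forall x y, d (x - y) = d x - d y.
Proof. by move=> hd x y; rewrite dD // dN. Qed.
Lemma d1 {R : realType} {B : comAlgType R} {d : B -> B} :
  is_derivation d -> d 1 = 0.
Proof. move=> hd; have := dM hd 1 1; rewrite !mul1r mulr1 => /eqP.
by rewrite -subr_eq0 opprD addrA subrr add0r oppr_eq0 => /eqP. Qed.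
Lemma dalg {R : realType} {B : comAlgType R} {d : B -> B} :
  is_derivation d -> forall c : R, d (c *: (1 : B)) = 0.
Proof. by move=> hd c; rewrite dZ // d1 // scaler0. Qed.
Lemma dnat {R : realType} {B : comAlgType R} {d : B -> B} :
  is_derivation d -> forall n, d (n%:R : B) = 0.
Proof. move=> hd n; have -> : (n%:R : B) = (n%:R : R) *: 1 by rewrite scaler_nat.
exact: dalg. Qed.
Lemma dsum {R : realType} {B : comAlgType R} {d : B -> B} :
  is_derivation d -> forall (I : Type) (r : seq I) (P : pred I) (F : I -> B),
  d (\sum_(i <- r | P i) F i) = \sum_(i <- r | P i) d (F i).
Proof. move=> hd I r P F; exact: (big_morph d (dD hd) (d0 hd)). Qed.

Lemma tri_exchange (B : zmodType) (m : nat) (f : nat -> nat -> B) :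
  \sum_(a < m.+1) \sum_(i < (m - a).+1) f a i =
  \sum_(i < m.+1) \sum_(a < (m - i).+1) f a i.
Proof.
have W : forall a : 'I_m.+1, \sum_(i < (m - a).+1) f a i =
   \sum_(i < m.+1) (if (a + i <= m)%N then f a i else 0).
  move=> a; rewrite (big_ord_widen m.+1 (fun i => f a i)) ?ltnS ?leq_subr //.
  rewrite big_mkcond; apply: eq_bigr => i _.
  by have := ltn_ord a; case: (ltnP i (m - a).+1); case: (leqP (a + i) m) => //; lia.
have W' : forall i : 'I_m.+1, \sum_(a < (m - i).+1) f a i =
   \sum_(a < m.+1) (if (a + i <= m)%N then f a i else 0).
  move=> i; rewrite (big_ord_widen m.+1 (fun a => f a i)) ?ltnS ?leq_subr //.
  rewrite big_mkcond; apply: eq_bigr => a _.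
  by have := ltn_ord i; case: (ltnP a (m - i).+1); case: (leqP (a + i) m) => //; lia.
rewrite (eq_bigr _ (fun a _ => W a)) (eq_bigr _ (fun i _ => W' i)).
exact: exchange_big.
Qed.
Definition Fm {R : realType} {B : comAlgType R} (Jf : nat -> B -> B)
  (k : nat -> B) (m : nat) : B := \sum_(i < m.+1) Jf i (k (m - i)%N).
Definition Qm {R : realType} {B : comAlgType R} (Pf : nat -> B -> B -> B)
  (k : nat -> B) (m : nat) : B :=
  \sum_(i < m.+1) \sum_(a < (m - i).+1) Pf i (k a) (k (m - i - a)%N).
Definition Sm {R : realType} {B : comAlgType R} (Jf : nat -> B -> B)
  (k : nat -> B) (m : nat) : B := \sum_(a < m.+1) k a * Fm Jf k (m - a).

Lemma rev_sum {R : realType} {B : comAlgType R} (n : nat) (G : nat -> nat -> B) :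
  \sum_(a < n.+1) G a (n - a)%N = \sum_(a < n.+1) G (n - a)%N a.
Proof.
rewrite (reindex_inj rev_ord_inj) /=; apply: eq_bigr => a _.
have := ltn_ord a; rewrite subSS => ha; rewrite subKn //.
Qed.

Lemma SQ {R : realType} {B : comAlgType R} {d : B -> B}
  (Jf : nat -> B -> B) (Pf : nat -> B -> B -> B) (k : nat -> B) (m : nat) :
  is_derivation d ->
  (forall i a b, a * Jf i b + b * Jf i a = d (Pf i a b)) ->
  Sm Jf k m + Sm Jf k m = d (Qm Pf k m).
Proof.
move=> hd HP.
have E : Sm Jf k m = \sum_(i < m.+1) \sum_(a < (m - i).+1)
           k a * Jf i (k (m - i - a)%N).
  rewrite /Sm /Fm.
  rewrite (eq_bigr (fun a : 'I_m.+1 => \sum_(i < (m - a).+1) k a * Jf i (k (m - a - i)%N))); last first.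
    by move=> a _; rewrite mulr_sumr.
  rewrite (tri_exchange _ m (fun a i => k a * Jf i (k (m - a - i)%N))); apply: eq_bigr => i _; apply: eq_bigr => a _.
  by rewrite subnAC.
rewrite E -big_split /= /Qm (dsum hd); apply: eq_bigr => i _.
rewrite (dsum hd).
rewrite [X in X + _ = _](rev_sum (m - i) (fun a b => k a * Jf i (k b))).
rewrite -big_split /=; apply: eq_bigr => a _.
by rewrite addrC HP.
Qed.
Lemma half_twice {R : realType} {B : comAlgType R} (x : B) :
  (2^-1 : R) *: (x + x) = x.
Proof.
rewrite -mulr2n -scaler_nat scalerA mulVf ?scale1r //.
by rewrite pnatr_eq0.
Qed.

Lemma double0 {R : realType} {B : comAlgType R} (x : B) : x + x = 0 -> x = 0.
Proof. by move=> h; rewrite -(half_twice x) h scaler0. Qed.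

Lemma F_zero {R : realType} {B : comAlgType R} {d : B -> B}
  (Jf : nat -> B -> B) (Pf : nat -> B -> B -> B) (k : nat -> B) (kap : B) :
  is_derivation d ->
  (forall i a b, a * Jf i b + b * Jf i a = d (Pf i a b)) ->
  kap * k 0%N = 1 -> Fm Jf k 0 = 0 ->
  (forall m, (0 < m)%N -> d (Qm Pf k m) = 0) ->
  forall m, Fm Jf k m = 0.
Proof.
move=> hd HP hk F0 HQ m; elim/ltn_ind: m => -[|m] IH //.
have S0 : Sm Jf k m.+1 = 0 by apply: double0; rewrite (SQ _ _ _ _ hd HP) HQ.
move: S0; rewrite /Sm big_ord_recl /= subn0 big1 ?addr0; last first.
  move=> a _; rewrite IH ?mulr0 //; rewrite /bump /=; lia.
move=> h; by rewrite -[Fm _ _ _]mul1r -hk -mulrA h mulr0.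
Qed.
Definition Rest {R : realType} {B : comAlgType R} (Pf : nat -> B -> B -> B)
  (f : nat -> B) (n : nat) : B :=
  \sum_(a < n) Pf 0%N (f a.+1) (f (n - a)%N) +
  \sum_(i < n.+1) \sum_(a < (n - i).+1) Pf i.+1 (f a) (f (n - i - a)%N).

Lemma Q_decomp {R : realType} {B : comAlgType R} (Pf : nat -> B -> B -> B)
  (k0 al : B) (f : nat -> B) (n : nat) :
  (forall x, Pf 0%N k0 x = al * x) -> (forall x, Pf 0%N x k0 = al * x) ->
  f 0%N = k0 ->
  Qm Pf f n.+1 = al * f n.+1 + al * f n.+1 + Rest Pf f n.
Proof.
move=> H1 H2 f0; rewrite /Qm /Rest big_ord_recl /= big_ord_recl /= big_ord_recr /=.
rewrite !subn0 subnn f0 H1 H2 -!addrA /bump; congr (_ + _).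
rewrite addrCA !leq0n !add1n; congr (_ + _); congr (_ + _).

Qed.

Lemma Rest_ext {R : realType} {B : comAlgType R} (Pf : nat -> B -> B -> B)
  (f g : nat -> B) (n : nat) :
  (forall a, (a <= n)%N -> f a = g a) -> Rest Pf f n = Rest Pf g n.
Proof.
move=> H; rewrite /Rest; congr (_ + _).
  apply: eq_bigr => a _; have := ltn_ord a => ha.
  by rewrite !H //; lia.
apply: eq_bigr => i _; apply: eq_bigr => a _.
have := ltn_ord a; have := ltn_ord i => hi ha.
by rewrite !H //; lia.
Qed.

Lemma Qm_ext {R : realType} {B : comAlgType R} (Pf : nat -> B -> B -> B)
  (f g : nat -> B) (m : nat) :
  (forall a, (a <= m)%N -> f a = g a) -> Qm Pf f m = Qm Pf g m.
Proof.
move=> H; rewrite /Qm; apply: eq_bigr => i _; apply: eq_bigr => a _.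
have := ltn_ord a; have := ltn_ord i => hi ha.
by rewrite !H //; lia.
Qed.

Definition upd {R : realType} {B : comAlgType R} (Pf : nat -> B -> B -> B)
  (ga : B) (f : nat -> B) (m : nat) : nat -> B :=
  fun a => if a == m then f m - ga * Qm Pf f m else f a.

Fixpoint seqF {R : realType} {B : comAlgType R} (Pf : nat -> B -> B -> B)
  (k0 ga : B) (m : nat) : nat -> B :=
  match m with
  | 0 => fun a => if a == 0%N then k0 else 0
  | m'.+1 => upd Pf ga (seqF Pf k0 ga m') m'.+1
  end.

Definition kseq {R : realType} {B : comAlgType R} (Pf : nat -> B -> B -> B)
  (k0 ga : B) (a : nat) : B := seqF Pf k0 ga a a.

Lemma seqF0 {R : realType} {B : comAlgType R} (Pf : nat -> B -> B -> B)
  (k0 ga : B) m : seqF Pf k0 ga m 0%N = k0.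
Proof. by elim: m => [|m IH] //=; rewrite /upd /= IH. Qed.

Lemma seqF_stable {R : realType} {B : comAlgType R} (Pf : nat -> B -> B -> B)
  (k0 ga : B) a m : (a <= m)%N -> seqF Pf k0 ga m a = kseq Pf k0 ga a.
Proof.
rewrite /kseq; elim: m => [|m IH].
  by rewrite leqn0 => /eqP ->.
rewrite leq_eqVlt => /orP [/eqP -> //|ha].
by rewrite /= /upd ifN ?IH // neq_ltn ha.
Qed.

Lemma kseq_Q {R : realType} {B : comAlgType R} (Pf : nat -> B -> B -> B)
  (k0 al ga : B) m :
  (forall x, Pf 0%N k0 x = al * x) -> (forall x, Pf 0%N x k0 = al * x) ->
  (al + al) * ga = 1 -> (0 < m)%N -> Qm Pf (kseq Pf k0 ga) m = 0.
Proof.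
move=> H1 H2 hg; case: m => [//|m] _.
rewrite (Qm_ext Pf _ (seqF Pf k0 ga m.+1)); last first.
  by move=> a ha; rewrite seqF_stable.
rewrite (Q_decomp _ _ _ _ _ H1 H2); last by rewrite seqF0.
rewrite /= {1 2}/upd eqxx.
rewrite (Rest_ext Pf _ (seqF Pf k0 ga m)); last first.
  by move=> a ha; rewrite /upd ifN // neq_ltn ltnS ha.
have := Q_decomp Pf k0 al (seqF Pf k0 ga m) m H1 H2 (seqF0 _ _ _ _).
set Q := Qm _ _ _; set x := seqF _ _ _ _ _; set r := Rest _ _ _ => HQ.
have -> : al * (x - ga * Q) + al * (x - ga * Q) + r =
          (al * x + al * x + r) - ((al + al) * ga) * Q by ring.
by rewrite hg mul1r -HQ subrr.
Qed.

Lemma Lc_sum {R : realType} {B : comAlgType R} (Lc : B -> Prop) :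
  Lc 0 -> (forall x y, Lc x -> Lc y -> Lc (x + y)) ->
  forall (I : Type) (r : seq I) (P : pred I) (F : I -> B),
  (forall i, P i -> Lc (F i)) -> Lc (\sum_(i <- r | P i) F i).
Proof. by move=> h0 hD I r P F hF; apply: big_ind. Qed.

Lemma seqF_loc {R : realType} {B : comAlgType R} (Pf : nat -> B -> B -> B)
  (k0 ga : B) (Lc : B -> Prop) :
  Lc 0 -> (forall x y, Lc x -> Lc y -> Lc (x + y)) ->
  (forall x y, Lc x -> Lc y -> Lc (x * y)) -> (forall x, Lc x -> Lc (- x)) ->
  (forall i a b, Lc a -> Lc b -> Lc (Pf i a b)) -> Lc k0 -> Lc ga ->
  forall m a, Lc (seqF Pf k0 ga m a).
Proof.
move=> h0 hD hM hN hP hk hg; elim => [|m IH] a /=.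
  by case: (a == 0%N).
rewrite /upd; case: (a == m.+1); last exact: IH.
apply hD; first exact: IH.
apply hN; apply hM => //; rewrite /Qm.
apply: (Lc_sum _ h0 hD) => i _; apply: (Lc_sum _ h0 hD) => b _; exact: hP.
Qed.
Definition Pop {R : realType} {B : comAlgType R} (N : nat) (d : B -> B)
  (eps : nat -> R) (u : nat -> B) (i : nat) (a b : B) : B :=
  (epsf N eps i / 4) *: (a * d (d b) + d (d a) * b - d a * d b) +
  ufld N u i * a * b.

Lemma scal_ex {R : realType} {B : comAlgType R} (c : R) :
  exists E : B, forall x, c *: x = E * x.
Proof. by exists (c%:A) => x; rewrite mulr_algl. Qed.

Lemma JP {R : realType} {B : comAlgType R} {d : B -> B} (N : nat)
  (eps : nat -> R) (u : nat -> B) (i : nat) (a b : B) :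
  is_derivation d ->
  a * Jop N d eps u i b + b * Jop N d eps u i a = d (Pop N d eps u i a b).
Proof.
move=> hd; rewrite /Jop /Pop.
rewrite !(dD hd, dZ hd, dN hd, dM hd).
have [t ht] := scal_ex (B := B) (2^-1 : R).
have [e he] := scal_ex (B := B) (epsf N eps i / 4).
have hh : t + t = 1.
  by rewrite -[RHS](half_twice (1 : B)) ht mulrDr !mulr1.
rewrite !ht !he.
move: (ufld N u i) => U.
apply/eqP; rewrite -subr_eq0; apply/eqP.
transitivity ((t + t - 1) * (U * (a * d b + b * d a) + d U * a * b)); first ring.
by rewrite hh subrr mul0r.
Qed.
Lemma Jop_big {R : realType} {B : comAlgType R} {d : B -> B} (N : nat)
  (eps : nat -> R) (u : nat -> B) (i : nat) (f : B) :
  is_derivation d -> (N < i)%N -> Jop N d eps u i f = 0.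
Proof.
move=> hd hi; rewrite /Jop /epsf /ufld.
have -> : (0 < i < N)%N = false by apply/negbTE; lia.
have -> : (i < N)%N = false by apply/negbTE; lia.
have -> : (i == N) = false by apply/negbTE; lia.
by rewrite mul0r scale0r add0r !mul0r (d0 hd) addr0 scaler0.
Qed.

Lemma Jop_opp {R : realType} {B : comAlgType R} {d : B -> B} (N : nat)
  (eps : nat -> R) (u : nat -> B) (i : nat) (f : B) :
  is_derivation d -> Jop N d eps u i (- f) = - Jop N d eps u i f.
Proof.
move=> hd; rewrite /Jop !(dN hd, mulrN).
by rewrite -opprD !scalerN -opprD.
Qed.

Lemma Jop_two {R : realType} {B : comAlgType R} {d : B -> B} (N : nat)
  (eps : nat -> R) (u : nat -> B) (i : nat) :
  is_derivation d -> Jop N d eps u i (- 2%:R) = - d (ufld N u i).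
Proof.
move=> hd; rewrite /Jop !(dN hd, dM hd, dnat hd).
have [t ht] := scal_ex (B := B) (2^-1 : R).
have hh : t + t = 1.
  by rewrite -[RHS](half_twice (1 : B)) ht mulrDr !mulr1.
rewrite !ht; move: (ufld N u i) => U.
rewrite !(d0 hd) oppr0 scaler0 add0r.
apply/eqP; rewrite -subr_eq0; apply/eqP.
transitivity ((t + t - 1) * - d U); first ring.
by rewrite hh subrr mul0r.
Qed.
Lemma ufldN {R : realType} {B : comAlgType R} (N : nat) (u : nat -> B) :
  ufld N u N = -1.
Proof. by rewrite /ufld ltnn eqxx. Qed.

Lemma epsfN {R : realType} (N : nat) (eps : nat -> R) : epsf N eps N = 0.
Proof. by rewrite /epsf ltnn andbF. Qed.

Lemma epsf0 {R : realType} (N : nat) (eps : nat -> R) : epsf N eps 0 = 0.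
Proof. by rewrite /epsf. Qed.

Lemma JN_two {R : realType} {B : comAlgType R} {d : B -> B} (N : nat)
  (eps : nat -> R) (u : nat -> B) :
  is_derivation d -> Jop N d eps u N (- 2%:R) = 0.
Proof. by move=> hd; rewrite (Jop_two _ _ _ _ hd) ufldN (dN hd) (d1 hd) !oppr0. Qed.

Lemma J0_winv {R : realType} {B : comAlgType R} {d : B -> B} (N : nat)
  (eps : nat -> R) (u : nat -> B) (w winv : B) :
  is_derivation d -> (0 < N)%N -> w * w = u 0%N -> w * winv = 1 ->
  Jop N d eps u 0 winv = 0.
Proof.
move=> hd hN hw hwi; rewrite /Jop epsf0 mul0r scale0r add0r.
rewrite /ufld hN -hw -(mulrA w w winv) hwi mulr1.
have h1 : d w * winv + w * d winv = 0 by rewrite -(dM hd) hwi (d1 hd).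
have -> : w * w * d winv = - d w.
  have h2 : w * d winv = - (d w * winv).
    by apply/eqP; rewrite -addr_eq0 addrC h1.
  by rewrite -mulrA h2 mulrN mulrCA hwi mulr1.
by rewrite addNr scaler0.
Qed.

Lemma PopN {R : realType} {B : comAlgType R} {d : B -> B} (N : nat)
  (eps : nat -> R) (u : nat -> B) (x : B) :
  Pop N d eps u N (- 2%:R) x = 2%:R * x /\ Pop N d eps u N x (- 2%:R) = 2%:R * x.
Proof.
rewrite /Pop epsfN ufldN !mul0r !scale0r !add0r; split.
  by rewrite mulN1r opprK.
by rewrite mulN1r mulrN mulNr opprK mulrC.
Qed.

Lemma Pop0 {R : realType} {B : comAlgType R} {d : B -> B} (N : nat)
  (eps : nat -> R) (u : nat -> B) (w winv x : B) :
  (0 < N)%N -> w * w = u 0%N -> w * winv = 1 ->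
  Pop N d eps u 0 (- winv) x = - w * x /\ Pop N d eps u 0 x (- winv) = - w * x.
Proof.
move=> hN hw hwi; rewrite /Pop epsf0 !mul0r !scale0r !add0r /ufld hN -hw; split.
  by rewrite mulrN -mulrA hwi mulr1 mulNr.
transitivity (- (w * (w * winv) * x)); first ring. by rewrite hwi mulr1 mulNr.
Qed.
Lemma LcZ' {R : realType} {B : comAlgType R} {N : nat} {d : B -> B}
  {u : nat -> B} {w winv : B} {Lc : B -> Prop} :
  local_subalg N d u w winv Lc -> forall (c : R) x, Lc x -> Lc (c *: x).
Proof. by case=> _ [_ [_ [_ [_ [_ [hZ _]]]]]]. Qed.
Lemma LcD' {R : realType} {B : comAlgType R} {N : nat} {d : B -> B}
  {u : nat -> B} {w winv : B} {Lc : B -> Prop} :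
  local_subalg N d u w winv Lc -> forall x y, Lc x -> Lc y -> Lc (x + y).
Proof. by case=> _ [_ [_ [_ [hD _]]]]. Qed.
Lemma LcM' {R : realType} {B : comAlgType R} {N : nat} {d : B -> B}
  {u : nat -> B} {w winv : B} {Lc : B -> Prop} :
  local_subalg N d u w winv Lc -> forall x y, Lc x -> Lc y -> Lc (x * y).
Proof. by case=> _ [_ [_ [_ [_ [hM _]]]]]. Qed.
Lemma Lcd' {R : realType} {B : comAlgType R} {N : nat} {d : B -> B}
  {u : nat -> B} {w winv : B} {Lc : B -> Prop} :
  local_subalg N d u w winv Lc -> forall x, Lc x -> Lc (d x).
Proof. by case=> _ [_ [_ [_ [_ [_ [_ hd]]]]]]. Qed.
Lemma Lc1' {R : realType} {B : comAlgType R} {N : nat} {d : B -> B}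
  {u : nat -> B} {w winv : B} {Lc : B -> Prop} :
  local_subalg N d u w winv Lc -> Lc 1.
Proof. by case=> _ [_ [_ [h _]]]. Qed.
Lemma Lcw' {R : realType} {B : comAlgType R} {N : nat} {d : B -> B}
  {u : nat -> B} {w winv : B} {Lc : B -> Prop} :
  local_subalg N d u w winv Lc -> Lc w /\ Lc winv.
Proof. by case=> _ [h1 [h2 _]]. Qed.
Lemma Lc0' {R : realType} {B : comAlgType R} {N : nat} {d : B -> B}
  {u : nat -> B} {w winv : B} {Lc : B -> Prop} :
  local_subalg N d u w winv Lc -> Lc 0.
Proof. move=> hL; rewrite -(scale0r (1 : B)); exact: (LcZ' hL) (Lc1' hL). Qed.
Lemma LcN' {R : realType} {B : comAlgType R} {N : nat} {d : B -> B}
  {u : nat -> B} {w winv : B} {Lc : B -> Prop} :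
  local_subalg N d u w winv Lc -> forall x, Lc x -> Lc (- x).
Proof. move=> hL x hx; rewrite -scaleN1r; exact: (LcZ' hL). Qed.
Lemma Lcufld {R : realType} {B : comAlgType R} {N : nat} {d : B -> B}
  {u : nat -> B} {w winv : B} {Lc : B -> Prop} :
  local_subalg N d u w winv Lc -> forall i, Lc (ufld N u i).
Proof.
move=> hL i; rewrite /ufld; case: ifP => hi; first by case: hL => hu _; exact: hu.
case: ifP => _; first exact: (LcN' hL) (Lc1' hL).
exact: Lc0' hL.
Qed.
Lemma LcJ {R : realType} {B : comAlgType R} {N : nat} {d : B -> B}
  {u : nat -> B} {w winv : B} {Lc : B -> Prop} (eps : nat -> R) :
  local_subalg N d u w winv Lc -> forall i f, Lc f -> Lc (Jop N d eps u i f).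
Proof.
move=> hL i f hf; rewrite /Jop.
have hd := Lcd' hL; have hM := LcM' hL; have hD := LcD' hL; have hZ := LcZ' hL.
have hU := Lcufld hL i.
exact: (hD _ _ (hZ _ _ (hd _ (hd _ (hd _ hf)))) (hZ _ _ (hD _ _ (hM _ _ hU (hd _ hf)) (hd _ (hM _ _ hU hf))))).
Qed.
Lemma LcP {R : realType} {B : comAlgType R} {N : nat} {d : B -> B}
  {u : nat -> B} {w winv : B} {Lc : B -> Prop} (eps : nat -> R) :
  local_subalg N d u w winv Lc ->
  forall i a b, Lc a -> Lc b -> Lc (Pop N d eps u i a b).
Proof.
move=> hL i a b ha hb; rewrite /Pop.
have hd := Lcd' hL; have hM := LcM' hL; have hD := LcD' hL; have hZ := LcZ' hL.
have hN := LcN' hL; have hU := Lcufld hL i.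
exact: (hD _ _ (hZ _ _ (hD _ _ (hD _ _ (hM _ _ ha (hd _ (hd _ hb))) (hM _ _ (hd _ (hd _ ha)) hb)) (hN _ (hM _ _ (hd _ ha) (hd _ hb))))) (hM _ _ (hM _ _ hU ha) hb)).
Qed.
Lemma nat_inv {R : realType} {B : comAlgType R} (n : nat) :
  (0 < n)%N -> (n%:R : B) * ((n%:R : R)^-1 *: 1) = 1.
Proof.
move=> hn; rewrite -scalerAr mulr1 -scaler_nat scalerA mulVf ?scale1r //.
by rewrite pnatr_eq0 -lt0n.
Qed.

Definition Jpos {R : realType} {B : comAlgType R} (N : nat) (d : B -> B)
  (eps : nat -> R) (u : nat -> B) (i : nat) : B -> B :=
  if (i <= N)%N then Jop N d eps u (N - i) else fun _ => 0.
Definition Ppos {R : realType} {B : comAlgType R} (N : nat) (d : B -> B)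
  (eps : nat -> R) (u : nat -> B) (i : nat) : B -> B -> B :=
  if (i <= N)%N then Pop N d eps u (N - i) else fun _ _ => 0.
Definition hpos {R : realType} {B : comAlgType R} (N : nat) (d : B -> B)
  (eps : nat -> R) (u : nat -> B) : nat -> B :=
  kseq (Ppos N d eps u) (- 2%:R) ((4%:R^-1 : R) *: 1).

Lemma JPpos {R : realType} {B : comAlgType R} {d : B -> B} (N : nat)
  (eps : nat -> R) (u : nat -> B) :
  is_derivation d -> forall i a b,
  a * Jpos N d eps u i b + b * Jpos N d eps u i a = d (Ppos N d eps u i a b).
Proof.
move=> hd i a b; rewrite /Jpos /Ppos; case: ifP => _; first exact: JP.
by rewrite !mulr0 addr0 (d0 hd).
Qed.

Lemma hpos0 {R : realType} {B : comAlgType R} (N : nat) (d : B -> B)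
  (eps : nat -> R) (u : nat -> B) : hpos N d eps u 0 = - 2%:R.
Proof. by []. Qed.

Lemma hpos_F {R : realType} {B : comAlgType R} {d : B -> B} (N : nat)
  (eps : nat -> R) (u : nat -> B) :
  is_derivation d -> forall m, Fm (Jpos N d eps u) (hpos N d eps u) m = 0.
Proof.
move=> hd; apply (F_zero (Jpos N d eps u) (Ppos N d eps u) (hpos N d eps u) (- ((2%:R^-1 : R) *: 1)) hd).
- exact: JPpos.
- rewrite hpos0 mulrNN mulrC; exact: nat_inv.
- by rewrite /Fm big_ord1 subn0 hpos0 /Jpos leq0n subn0 (JN_two N eps u hd).
- move=> m hm; rewrite /hpos (kseq_Q _ _ (2%:R)) ?(d0 hd) //.
  + by move=> x; rewrite /Ppos leq0n subn0; case: (PopN (d:=d) N eps u x).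
  + by move=> x; rewrite /Ppos leq0n subn0; case: (PopN (d:=d) N eps u x).
  + by rewrite -natrD; apply: nat_inv.
Qed.
Definition Kpos {R : realType} {B : comAlgType R} (N : nat) (d : B -> B)
  (eps : nat -> R) (u : nat -> B) (s c : nat) : B :=
  - \sum_(j < s.+1) (if (j <= c)%N then
        Jop N d eps u (c - j) (hpos N d eps u (s - j)) else 0).

Lemma Kpos0 {R : realType} {B : comAlgType R} {d : B -> B} (N : nat)
  (eps : nat -> R) (u : nat -> B) c :
  is_derivation d -> Kpos N d eps u 0 c = K0 N d u c.
Proof.
by move=> hd; rewrite /Kpos big_ord1 leq0n !subn0 hpos0 (Jop_two _ _ _ _ hd) opprK.
Qed.

Lemma Kpos_rel {R : realType} {B : comAlgType R} {d : B -> B} (N : nat)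
  (eps : nat -> R) (u : nat -> B) s :
  is_derivation d -> (0 < N)%N ->
  Rrel N d eps u (Kpos N d eps u s) (Kpos N d eps u s.+1).
Proof.
move=> hd hN; exists (hpos N d eps u s.+1); split.
  have := hpos_F N eps u hd s.+1; rewrite /Fm big_ord_recl /= subn0.
  rewrite {1}/Jpos leq0n subn0.
  have -> : \sum_(i < s.+1) Jpos N d eps u (bump 0 i) (hpos N d eps u (s.+1 - bump 0 i))
     = \sum_(j < s.+1) (if (j <= N.-1)%N then
        Jop N d eps u (N.-1 - j) (hpos N d eps u (s - j)) else 0).
    apply: eq_bigr => i _; have -> : bump 0 i = i.+1 by []; rewrite subSS /Jpos.
    have -> : (i.+1 <= N)%N = (i <= N.-1)%N by lia.
    case: ifP => // _; congr Jop; lia.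
  by move/eqP; rewrite addr_eq0 => /eqP.
move=> c hc; rewrite /Kpos big_ord_recl /= !subn0.
case: c hc => [|c] hc.
  rewrite big1 ?addr0 ?sub0r //.
rewrite opprD addrC; congr (_ + _).
Qed.

Lemma Kpos_loc {R : realType} {B : comAlgType R} {d : B -> B} (N : nat)
  (eps : nat -> R) (u : nat -> B) (w winv : B) (Lc : B -> Prop) :
  local_subalg N d u w winv Lc -> forall s c, Lc (Kpos N d eps u s c).
Proof.
move=> hL s c; apply: (LcN' hL); apply: (Lc_sum _ (Lc0' hL) (LcD' hL)) => j _.
case: ifP => _; last exact: Lc0' hL.
apply: (LcJ eps hL); rewrite /hpos /kseq.
apply (seqF_loc _ _ _ _ (Lc0' hL) (LcD' hL) (LcM' hL) (LcN' hL)).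
- move=> i a b ha hb; rewrite /Ppos; case: ifP => _; [exact: (LcP eps hL) | exact: Lc0' hL].
- apply: (LcN' hL); have -> : (2%:R : B) = (2%:R : R) *: 1 by rewrite scaler_nat.
  exact: (LcZ' hL) (Lc1' hL).
- exact: (LcZ' hL) (Lc1' hL).
Qed.
Definition kneg {R : realType} {B : comAlgType R} (N : nat) (d : B -> B)
  (eps : nat -> R) (u : nat -> B) (winv : B) : nat -> B :=
  kseq (Pop N d eps u) (- winv) (- ((2%:R^-1 : R) *: winv)).

Lemma kneg0 {R : realType} {B : comAlgType R} (N : nat) (d : B -> B)
  (eps : nat -> R) (u : nat -> B) (winv : B) : kneg N d eps u winv 0 = - winv.
Proof. by []. Qed.

Lemma kneg_F {R : realType} {B : comAlgType R} {d : B -> B} (N : nat)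
  (eps : nat -> R) (u : nat -> B) (w winv : B) :
  is_derivation d -> (0 < N)%N -> w * w = u 0%N -> w * winv = 1 ->
  forall m, Fm (Jop N d eps u) (kneg N d eps u winv) m = 0.
Proof.
move=> hd hN hw hwi.
apply (F_zero (Jop N d eps u) (Pop N d eps u) (kneg N d eps u winv) (- w) hd).
- by move=> i a b; apply: JP.
- by rewrite kneg0 mulrNN.
- by rewrite /Fm big_ord1 subn0 kneg0 (Jop_opp _ _ _ _ _ hd) (J0_winv N eps u w winv hd hN hw hwi) oppr0.
- move=> m hm; rewrite /kneg (kseq_Q _ _ (- w)) ?(d0 hd) //.
  + by move=> x; case: (Pop0 (d:=d) N eps u w winv x hN hw hwi).
  + by move=> x; case: (Pop0 (d:=d) N eps u w winv x hN hw hwi).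
  + by rewrite -opprD mulrNN -scalerAr mulrDl hwi half_twice.
Qed.

Definition Kneg {R : realType} {B : comAlgType R} (N : nat) (d : B -> B)
  (eps : nat -> R) (u : nat -> B) (winv : B) (s c : nat) : B :=
  \sum_(j < s.+1) Jop N d eps u (c + j).+1 (kneg N d eps u winv (s - j)).

Lemma Kneg0 {R : realType} {B : comAlgType R} {d : B -> B} (N : nat)
  (eps : nat -> R) (u : nat -> B) (winv : B) c :
  is_derivation d -> Kneg N d eps u winv 0 c = Km1 N d eps u winv c.
Proof.
by move=> hd; rewrite /Kneg big_ord1 addn0 subn0 kneg0 (Jop_opp _ _ _ _ _ hd).
Qed.

Lemma Kneg_rel {R : realType} {B : comAlgType R} {d : B -> B} (N : nat)
  (eps : nat -> R) (u : nat -> B) (w winv : B) s :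
  is_derivation d -> (0 < N)%N -> w * w = u 0%N -> w * winv = 1 ->
  Rrel N d eps u (Kneg N d eps u winv s.+1) (Kneg N d eps u winv s).
Proof.
move=> hd hN hw hwi; exists (kneg N d eps u winv s.+1); split.
  rewrite /Kneg big_ord_recl /= addn0 prednK // subn0 big1 ?addr0 //.
  move=> i _; apply: (Jop_big _ _ _ _ _ hd).
  have -> : bump 0 i = i.+1 by []. lia.
move=> c hc; case: c hc => [|c] hc.
  have := kneg_F N eps u w winv hd hN hw hwi s.+1.
  rewrite /Fm big_ord_recl /= subn0 => /eqP; rewrite addr_eq0 => /eqP ->.
  rewrite sub0r opprK /Kneg; apply: eq_bigr => i _.
  by have -> : bump 0 i = i.+1 by [].
rewrite {2}/Kneg big_ord_recl /= addn0 subn0 [X in X - _]addrC addrK.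
rewrite /Kneg; apply: eq_bigr => i _.
have -> : bump 0 i = i.+1 by [].
by rewrite addnS addSn subSS.
Qed.

Lemma Kneg_loc {R : realType} {B : comAlgType R} {d : B -> B} (N : nat)
  (eps : nat -> R) (u : nat -> B) (w winv : B) (Lc : B -> Prop) :
  local_subalg N d u w winv Lc -> forall s c, Lc (Kneg N d eps u winv s c).
Proof.
move=> hL s c; apply: (Lc_sum _ (Lc0' hL) (LcD' hL)) => j _.
apply: (LcJ eps hL); rewrite /kneg /kseq.
apply (seqF_loc _ _ _ _ (Lc0' hL) (LcD' hL) (LcM' hL) (LcN' hL)).
- exact: (LcP eps hL).
- by apply: (LcN' hL); case: (Lcw' hL).
- by apply: (LcN' hL); apply: (LcZ' hL); case: (Lcw' hL).
Qed.

Theorem mainTheorem6 (R : realType) (B : comAlgType R) (N : nat)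
  (d : B -> B) (eps : nat -> R) (u : nat -> B) (w winv : B)
  (Lc : B -> Prop) :
  (0 < N)%N ->
  is_derivation d ->
  (forall b : B, exists a : B, d a = b) ->
  w * w = u 0%N ->
  w * winv = 1 ->
  local_subalg N d u w winv Lc ->
  (* K_s = R^s K_0 is local for all s >= 0 *)
  (exists Kp : nat -> nat -> B,
      (forall c, (c < N)%N -> Kp 0%N c = K0 N d u c) /\
      (forall s, Rrel N d eps u (Kp s) (Kp s.+1)) /\
      (forall s c, (c < N)%N -> Lc (Kp s c))) /\
  (* Kn s = K_{-(s+1)};  K_{-(s+2)} = R^{-1} K_{-(s+1)} is local *)
  (exists Kn : nat -> nat -> B,
      (forall c, (c < N)%N -> Kn 0%N c = Km1 N d eps u winv c) /\
      (forall s, Rrel N d eps u (Kn s.+1) (Kn s)) /\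
      (forall s c, (c < N)%N -> Lc (Kn s c))).
Proof.
move=> hN hd _ hw hwi hL; split.
  exists (Kpos N d eps u); split; first by move=> c _; exact: Kpos0.
  split; first by move=> s; exact: Kpos_rel.
  by move=> s c _; exact: (Kpos_loc N eps u w winv Lc hL).
exists (Kneg N d eps u winv); split; first by move=> c _; exact: Kneg0.
split; first by move=> s; exact: (Kneg_rel N eps u w winv s hd hN hw hwi).
by move=> s c _; exact: (Kneg_loc N eps u w winv Lc hL).
Qed.
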